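(* Let $m\ge1$, $\boldsymbol\gamma=(\gamma_1,\ldots,\gamma_m)\in\mathbb{N}^m$ and $f_1,\ldots,f_{m+1}$ arithmetic functions. For $1\le j\le m+1$ and fixed $n_1,\ldots,n_{j-1},n_{j+1},\ldots,n_{m+1}\in\mathbb{N}$ put \[ \Phi_j(s):=\sum_{n_j=1}^\infty S^{\boldsymbol\gamma}_{f_1,\ldots,f_{m+1}}(n_1,\ldots,n_{m+1})\,n_j^{-s}. \] (i) For $\Re(s)>\sigma(f_1)$, \[ \Phi_1(s)=L(s;f_1)\,F_1(n_2),\qquad F_1:=\delta^{-s}\bigl(G_2*_{\gamma_1}\delta^s\bigr),\quad G_2:=S^{(\gamma_2,\ldots,\gamma_m)}_{f_2,\ldots,f_{m+1}}(\,\cdot\,,n_3,\ldots,n_{m+1}), \] i.e. $F_1(n_2)=\sum_{d\in\mathbb{N},\,d^{\gamma_1}\mid n_2}G_2(d^{\gamma_1})\,d^{-\gamma_1 s}$. (ii) For $2\le j\le m+1$ and $\Re(s)>1$, \[ \Phi_j(s)=\zeta(s)\,S^{(\gamma_1,\ldots,\gamma_{j-2})}_{f_1,\ldots,f_{j-2},F_j}(n_1,\ldots,n_{j-1}), \] where $F_j:=\delta^{-s}\bigl(G_j*_{\gamma_{j-1}}(\delta^sf_{j-1})\bigr)$ and $G_j:=S^{(\gamma_j,\ldots,\gamma_m)}_{f_j,\ldots,f_{m+1}}(\,\cdot\,,n_{j+1},\ldots,n_{m+1})$.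
   Context: An arithmetic function is a map $f:\mathbb{N}\to\mathbb{C}$, with $f(x)=0$ for $x\notin\mathbb{N}$; products $gh$ of arithmetic functions are pointwise, and $\delta^x(n):=n^x$ for $x\in\mathbb{C}$. $L(s;f)=\sum_{n\ge1}f(n)n^{-s}$, $\sigma(f)$ its abscissa of absolute convergence, $\zeta$ the Riemann zeta function. For $\gamma\in\mathbb{N}$ and arithmetic functions $g,h$, $(g*_\gamma h)(n):=\sum_{d\in\mathbb{N},\,d^\gamma\mid n}h(n/d^\gamma)\,g(d^\gamma)$. For $k\ge0$, $(\gamma_1,\ldots,\gamma_k)\in\mathbb{N}^k$ and arithmetic functions $g_1,\ldots,g_{k+1}$, \[ S^{(\gamma_1,\ldots,\gamma_k)}_{g_1,\ldots,g_{k+1}}(n_1,\ldots,n_{k+1}):=\sum_{\substack{(d_1,\ldots,d_k)\in\mathbb{N}^k\\ d_i^{\gamma_i}\mid\gcd(n_1,\ldots,n_{i+1})\ (1\le i\le k)}} g_1\Bigl(\frac{n_1}{d_1^{\gamma_1}}\Bigr)g_2\Bigl(\frac{d_1^{\gamma_1}}{d_2^{\gamma_2}}\Bigr)\cdots g_k\Bigl(\frac{d_{k-1}^{\gamma_{k-1}}}{d_k^{\gamma_k}}\Bigr)g_{k+1}\bigl(d_k^{\gamma_k}\bigr), \] with the convention that for $k=0$ (empty parameter list) $S_{g_1}(n_1)=g_1(n_1)$. In (i) and (ii), $G_j$ denotes the arithmetic function $x\mapsto S^{(\gamma_j,\ldots,\gamma_m)}_{f_j,\ldots,f_{m+1}}(x,n_{j+1},\ldots,n_{m+1})$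 (for $j=m+1$ this is $f_{m+1}$), and $F_j$ depends on $s$. *)

(* Defs.v *)
From Stdlib Require Import Reals List Arith.
From Coquelicot Require Import Coquelicot.
Import ListNotations.
Open Scope R_scope.

(* An arithmetic function N -> C (the value at 0 is never used). *)
Definition arith := nat -> C.

(* Complex power x^s := exp(s log x) for a real x > 0. *)
Definition cpow (x : R) (s : C) : C :=
  (exp (Re s * ln x) * cos (Im s * ln x), exp (Re s * ln x) * sin (Im s * ln x)).

Definition delta (s : C) : arith := fun n => cpow (INR n) s.

Definition dvdb (a b : nat) : bool := Nat.eqb (b mod a) 0.

Definition at_ratio (f : arith) (a b : nat) : C :=
  if dvdb b a then f (a / b)%nat else 0%R.

Definition sum_dvd (N : nat) (P : nat -> bool) (F : nat -> C) : C :=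
  sum_n_m (fun d => if P d then F d else RtoC 0) 1 N.

(* (g *_gam h)(n) = sum_{d in N, d^gam | n} h(n/d^gam) g(d^gam).
   For gam >= 1 and n >= 1, every such d satisfies d <= n. *)
Definition star (gam : nat) (g h : arith) : arith := fun n =>
  sum_dvd n (fun d => dvdb (Nat.pow d gam) n)
    (fun d => Cmult (at_ratio h n (Nat.pow d gam)) (g (Nat.pow d gam))).

(* Nested sum defining S.  G = gcd(n_1,...,n_i) so far, prev = n_1 or the
   previous d_{i-1}^{gam_{i-1}}. *)
Fixpoint Saux (gs : list nat) (fs : list arith) (ns : list nat)
  (G prev : nat) : C :=
  match gs, fs, ns with
  | [], [g], [] => g prev
  | gam :: gs', g :: fs', n :: ns' =>
      let G' := Nat.gcd G n in
      sum_dvd G' (fun d => dvdb (Nat.pow d gam) G')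
        (fun d => Cmult (at_ratio g prev (Nat.pow d gam)) (Saux gs' fs' ns' G' (Nat.pow d gam)))
  | _, _, _ => RtoC 0
  end.

(* Sfun = S^{(gam_1,...,gam_k)}_{g_1,...,g_{k+1}}(n_1,...,n_{k+1}) *)
Definition Sfun (gs : list nat) (fs : list arith) (ns : list nat) : C :=
  match ns with
  | n1 :: ns' => Saux gs fs ns' n1 n1
  | [] => RtoC 0
  end.

Definition sigma_abs (f : arith) : Rbar :=
  Glb_Rbar (fun x : R =>
    ex_series (fun k => Cmod (f (S k)) * Rpower (INR (S k)) (- x))).

(* Main.v *)
Require Import Defs.
From Stdlib Require Import Reals List Arith Lia Lra Classical.
From Coquelicot Require Import Coquelicot.
Import ListNotations.
Open Scope R_scope.



Lemma sc2 x : sin x ^2 + cos x ^2 = 1.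
Proof. rewrite <- (sin2_cos2 x). unfold Rsqr. ring. Qed.

Lemma cpow_mult x y s : 0 < x -> 0 < y -> cpow (x * y) s = Cmult (cpow x s) (cpow y s).
Proof.
  intros Hx Hy. unfold cpow, Cmult. rewrite ln_mult by auto.
  set (a := Re s). set (b := Im s). simpl.
  replace (a * (ln x + ln y)) with (a * ln x + a * ln y) by ring.
  replace (b * (ln x + ln y)) with (b * ln x + b * ln y) by ring.
  rewrite exp_plus, cos_plus, sin_plus. f_equal; ring.
Qed.

Lemma cpow_opp x s : Cmult (cpow x (Copp s)) (cpow x s) = RtoC 1.
Proof.
  unfold cpow, Cmult. 
  replace (Re (Copp s)) with (- Re s) by reflexivity.
  replace (Im (Copp s)) with (- Im s) by reflexivity.
  set (a := Re s). set (b := Im s). simpl.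
  replace (- a * ln x) with (- (a * ln x)) by ring.
  replace (- b * ln x) with (- (b * ln x)) by ring.
  rewrite cos_neg, sin_neg.
  assert (E : exp (- (a * ln x)) * exp (a * ln x) = 1).
  { rewrite <- exp_plus. replace (- (a * ln x) + a * ln x) with 0 by ring. apply exp_0. }
  unfold RtoC. f_equal.
  - transitivity (exp (- (a * ln x)) * exp (a * ln x) * (sin (b * ln x) ^2 + cos (b * ln x)^2)).
    ring. rewrite E, sc2. ring.
  - ring.
Qed.

Lemma Cmod_cpow x s : Cmod (cpow x s) = exp (Re s * ln x).
Proof.
  unfold Cmod, cpow. set (a := Re s). set (b := Im s). simpl.
  replace (exp (a * ln x) * cos (b * ln x) * (exp (a * ln x) * cos (b * ln x) * 1) +
   exp (a * ln x) * sin (b * ln x) * (exp (a * ln x) * sin (b * ln x) * 1))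
  with (exp (a * ln x) * exp (a * ln x) * (sin (b * ln x) ^2 + cos (b * ln x) ^2)) by ring.
  rewrite sc2, Rmult_1_r. apply sqrt_square. left; apply exp_pos.
Qed.

Lemma delta_mul s a b : (1 <= a)%nat -> (1 <= b)%nat ->
  delta s (a * b)%nat = Cmult (delta s a) (delta s b).
Proof.
  intros. unfold delta. rewrite mult_INR. apply cpow_mult; apply lt_0_INR; lia.
Qed.



Lemma dvdb_spec a b : dvdb a b = true <-> Nat.divide a b.
Proof. unfold dvdb. rewrite Nat.eqb_eq. apply Nat.Lcm0.mod_divide. Qed.

Lemma dvdb_false a b : dvdb a b = false <-> ~ Nat.divide a b.
Proof. rewrite <- dvdb_spec. destruct (dvdb a b); split; congruence. Qed.

Lemma npow_ge d g : (1 <= d)%nat -> (1 <= g)%nat -> (d <= Nat.pow d g)%nat.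
Proof.
  intros. replace d with (Nat.pow d 1) at 1 by (simpl; lia).
  apply Nat.pow_le_mono_r; lia.
Qed.

Lemma npow_pos d g : (1 <= d)%nat -> (1 <= Nat.pow d g)%nat.
Proof. intros. assert (Nat.pow d g <> 0%nat) by (apply Nat.pow_nonzero; lia). lia. Qed.

Lemma dvd_bound d g n : (1 <= d)%nat -> (1 <= g)%nat -> (1 <= n)%nat ->
  Nat.divide (Nat.pow d g) n -> (d <= n)%nat.
Proof.
  intros. apply Nat.le_trans with (Nat.pow d g). apply npow_ge; auto.
  apply Nat.divide_pos_le; auto; lia.
Qed.

Lemma sum_extend (h : nat -> C) N M : (N <= M)%nat ->
  (forall d, (N < d)%nat -> h d = RtoC 0) -> sum_n_m h 1 N = sum_n_m h 1 M.
Proof.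
  intros HNM Hz. induction M.
  - assert (N = 0%nat) by lia. subst. reflexivity.
  - destruct (Nat.eq_dec N (S M)) as [E|E]. subst; reflexivity.
    rewrite sum_n_Sm by lia. rewrite <- IHM by lia. rewrite Hz by lia.
    symmetry. exact (plus_zero_r (G := C_AbelianMonoid) _).
Qed.

Lemma sum_eq_bound (h1 h2 : nat -> C) N1 N2 :
  (forall d, (1 <= d)%nat -> h1 d = h2 d) ->
  (forall d, (N1 < d)%nat -> h1 d = RtoC 0) ->
  (forall d, (N2 < d)%nat -> h2 d = RtoC 0) ->
  sum_n_m h1 1 N1 = sum_n_m h2 1 N2.
Proof.
  intros He Z1 Z2.
  rewrite (sum_extend h1 N1 (Nat.max N1 N2)) by (auto; lia).
  rewrite (sum_extend h2 N2 (Nat.max N1 N2)) by (auto; lia).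
  apply sum_n_m_ext_loc. intros; apply He; lia.
Qed.

Lemma sum_dvd_eq N1 (P1 : nat -> bool) (F1 : nat -> C) N2 (P2 : nat -> bool) (F2 : nat -> C) :
  (forall d, (1 <= d)%nat -> (if P1 d then F1 d else RtoC 0) = (if P2 d then F2 d else RtoC 0)) ->
  (forall d, P1 d = true -> (d <= N1)%nat) ->
  (forall d, P2 d = true -> (d <= N2)%nat) ->
  sum_dvd N1 P1 F1 = sum_dvd N2 P2 F2.
Proof.
  intros He B1 B2. unfold sum_dvd. apply sum_eq_bound; auto.
  - intros d Hd. destruct (P1 d) eqn:E; auto. apply B1 in E. lia.
  - intros d Hd. destruct (P2 d) eqn:E; auto. apply B2 in E. lia.
Qed.

Lemma sum_dvd_mult_r N P F c :
  Cmult (sum_dvd N P F) c = sum_dvd N P (fun d => Cmult (F d) c).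
Proof.
  unfold sum_dvd. rewrite <- (sum_n_m_mult_r (K := C_Ring)).
  apply sum_n_m_ext. intros d. destruct (P d); simpl; [reflexivity|].
  change (Cmult (RtoC 0) c = RtoC 0). ring.
Qed.

Lemma sum_dvd_mult_l N P F c :
  Cmult c (sum_dvd N P F) = sum_dvd N P (fun d => Cmult c (F d)).
Proof.
  unfold sum_dvd. rewrite <- (sum_n_m_mult_l (K := C_Ring)).
  apply sum_n_m_ext. intros d. destruct (P d); simpl; [reflexivity|].
  change (Cmult c (RtoC 0) = RtoC 0). ring.
Qed.

Lemma is_series_zero : is_series (fun _ : nat => RtoC 0) (RtoC 0).
Proof.
  unfold is_series.
  eapply filterlim_ext; [| apply filterlim_const].
  intros n. simpl. unfold sum_n. symmetry. apply (sum_n_m_const_zero (G := C_AbelianMonoid)).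
Qed.

Lemma is_series_Cmult_l c (a : nat -> C) l : is_series a l ->
  is_series (fun n => Cmult c (a n)) (Cmult c l).
Proof. intros H. apply (is_series_scal_l c a l H). Qed.

Lemma is_series_sum_dvd N P (u : nat -> nat -> C) (l : nat -> C) :
  (forall d, (1 <= d <= N)%nat -> P d = true -> is_series (u d) (l d)) ->
  is_series (fun k => sum_dvd N P (fun d => u d k)) (sum_dvd N P l).
Proof.
  intros H. induction N.
  - unfold sum_dvd. rewrite sum_n_m_zero by lia.
    eapply is_series_ext; [| apply is_series_zero].
    intros n. rewrite sum_n_m_zero by lia. reflexivity.
  - unfold sum_dvd in *. rewrite sum_n_Sm by lia.
    assert (H2 : is_series (fun n => if P (S N) then u (S N) n else RtoC 0)
                           (if P (S N) then l (S N) else RtoC 0)).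
    { destruct (P (S N)) eqn:E. apply H; auto; lia. apply is_series_zero. }
    assert (H1 := IHN ltac:(intros; apply H; auto; lia)).
    eapply is_series_ext.
    2:{ apply (is_series_plus (K := C_AbsRing) (V := C_NormedModule) _ _ _ _ H1 H2). }
    intros n. simpl. rewrite sum_n_Sm by lia. reflexivity.
Qed.



Lemma sparse_step (c : nat -> C) D n : (1 <= D)%nat ->
  sum_n_m c 1 (S n / D)%nat =
  plus (sum_n_m c 1 (n / D)%nat) (if dvdb D (S n) then c (S n / D)%nat else RtoC 0).
Proof.
  intros HD.
  pose proof (Nat.div_mod n D ltac:(lia)) as Hdm.
  pose proof (Nat.mod_bound_pos n D ltac:(lia) ltac:(lia)) as Hb.
  set (q := (n / D)%nat) in *. set (r := (n mod D)%nat) in *.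
  destruct (Nat.eq_dec (S r) D) as [E|E].
  - assert (Hq : (S q) = (S n / D)%nat) by (apply (Nat.div_unique _ _ _ 0); lia).
    assert (Hdv : dvdb D (S n) = true).
    { apply dvdb_spec. exists (S q). lia. }
    rewrite Hdv, <- Hq. rewrite sum_n_Sm by lia. reflexivity.
  - assert (Hq : q = (S n / D)%nat) by (apply (Nat.div_unique _ _ _ (S r)); lia).
    assert (Hdv : dvdb D (S n) = false).
    { apply dvdb_false. intros [k Hk].
      assert (Hr : S r = (S n mod D)%nat) by (apply (Nat.mod_unique _ _ q); lia).
      rewrite Hk in Hr. rewrite Nat.Div0.mod_mul in Hr. lia. }
    rewrite Hdv, <- Hq. symmetry. exact (plus_zero_r (G := C_AbelianMonoid) _).
Qed.

Lemma sparse_partial (c : nat -> C) D N : (1 <= D)%nat ->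
  sum_n (fun k => if dvdb D (S k) then c (S k / D)%nat else RtoC 0) N = sum_n_m c 1 (S N / D)%nat.
Proof.
  intros HD. induction N.
  - unfold sum_n. rewrite sum_n_n. rewrite sparse_step by auto.
    rewrite Nat.Div0.div_0_l. rewrite sum_n_m_zero by lia.
    exact (eq_sym (plus_zero_l (G := C_AbelianMonoid) _)).
  - rewrite sum_Sn, IHN. rewrite (sparse_step c D (S N)) by auto. reflexivity.
Qed.

Lemma sparse (c : nat -> C) L D : (1 <= D)%nat -> is_series (fun i => c (S i)) L ->
  is_series (fun k => if dvdb D (S k) then c (S k / D)%nat else RtoC 0) L.
Proof.
  intros HD H. unfold is_series in *.
  assert (H1 : filterlim (fun i => sum_n_m c 1 (S i)) eventually (locally L)).
  { eapply filterlim_ext; [| exact H]. intros i. unfold sum_n. apply sum_n_m_S. }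
  assert (Hphi : filterlim (fun N => (S N / D - 1)%nat) eventually eventually).
  { intros P [N0 HN0]. exists (D * (N0 + 1))%nat. intros n Hn. apply HN0.
    assert (((D * (N0 + 1)) / D <= S n / D)%nat) by (apply Nat.Div0.div_le_mono; lia).
    rewrite Nat.mul_comm, Nat.div_mul in H0 by lia. lia. }
  assert (H2 := filterlim_comp _ _ _ _ _ _ _ _ Hphi H1). simpl in H2.
  eapply filterlim_ext_loc; [| exact H2].
  exists (D - 1)%nat. intros n Hn. rewrite sparse_partial by auto.
  assert (((D - 1 + 1) / D <= S n / D)%nat) by (apply Nat.Div0.div_le_mono; lia).
  replace (D - 1 + 1)%nat with (1 * D)%nat in H0 by lia. rewrite Nat.div_mul in H0 by lia.
  f_equal. lia.
Qed.



Lemma gcd_pos G n : (1 <= G)%nat -> (1 <= Nat.gcd G n)%nat.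
Proof.
  intros. destruct (Nat.eq_dec (Nat.gcd G n) 0) as [E|E].
  - apply Nat.gcd_eq_0 in E. lia.
  - lia.
Qed.

Lemma dvdb_gcd D G n : Nat.divide D G -> dvdb D (Nat.gcd G n) = dvdb D n.
Proof.
  intros HG. destruct (dvdb D n) eqn:E.
  - apply dvdb_spec. apply dvdb_spec in E. apply Nat.gcd_greatest; auto.
  - apply dvdb_false. apply dvdb_false in E. intros Hc. apply E.
    eapply Nat.divide_trans; [exact Hc| apply Nat.gcd_divide_r].
Qed.

Lemma at_ratio_nd f a b : dvdb b a = false -> at_ratio f a b = RtoC 0.
Proof. intros E. unfold at_ratio. rewrite E. reflexivity. Qed.

Lemma Cmult_0_l' (x : C) : Cmult (RtoC 0) x = RtoC 0.
Proof. ring. Qed.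

Lemma Saux_gcd gs : (forall g, In g gs -> (1 <= g)%nat) ->
  forall fs ns G H prev, (1 <= G)%nat -> (1 <= H)%nat ->
  Nat.divide prev G -> Nat.divide prev H ->
  Saux gs fs ns G prev = Saux gs fs ns H prev.
Proof.
  induction gs as [|g gs IH]; intros Hg fs ns G H prev HG HH DG DH.
  - destruct fs as [|f [|f' fs]]; destruct ns; reflexivity.
  - destruct fs as [|f fs]; [reflexivity|]. destruct ns as [|n ns]; [reflexivity|].
    cbn [Saux].
    assert (Hg1 : (1 <= g)%nat) by (apply Hg; left; auto).
    apply sum_dvd_eq.
    + intros d Hd. destruct (dvdb (Nat.pow d g) prev) eqn:Ep.
      * apply dvdb_spec in Ep.
        rewrite !dvdb_gcd by (eapply Nat.divide_trans; eauto).
        destruct (dvdb (Nat.pow d g) n) eqn:En; [|reflexivity].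
        f_equal. apply IH.
        -- intros; apply Hg; right; auto.
        -- apply gcd_pos; auto.
        -- apply gcd_pos; auto.
        -- apply Nat.gcd_greatest. eapply Nat.divide_trans; eauto. apply dvdb_spec; auto.
        -- apply Nat.gcd_greatest. eapply Nat.divide_trans; eauto. apply dvdb_spec; auto.
      * rewrite !at_ratio_nd by auto. rewrite !Cmult_0_l'.
        destruct (dvdb _ (Nat.gcd G n)), (dvdb _ (Nat.gcd H n)); reflexivity.
    + intros d Hd. apply dvdb_spec in Hd. destruct d; [lia|].
      eapply dvd_bound; eauto; try lia. apply gcd_pos; auto.
    + intros d Hd. apply dvdb_spec in Hd. destruct d; [lia|].
      eapply dvd_bound; eauto; try lia. apply gcd_pos; auto.
Qed.



Lemma series_sum_sparse g N (P : nat -> bool) (A : nat -> C) (c : nat -> C) L :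
  (1 <= g)%nat -> is_series (fun i => c (S i)) L ->
  is_series (fun k => sum_dvd N P (fun d => Cmult (A d)
      (if dvdb (Nat.pow d g) (S k) then c (S k / Nat.pow d g)%nat else RtoC 0)))
    (sum_dvd N P (fun d => Cmult (A d) L)).
Proof.
  intros Hg HL.
  apply (is_series_sum_dvd N P (fun d k => Cmult (A d)
      (if dvdb (Nat.pow d g) (S k) then c (S k / Nat.pow d g)%nat else RtoC 0))
     (fun d => Cmult (A d) L)).
  intros d Hd _. apply is_series_Cmult_l. apply sparse; auto. apply npow_pos; lia.
Qed.

Lemma div_exact_eq P D : (1 <= D)%nat -> Nat.divide D P -> P = (D * (P / D))%nat.
Proof.
  intros HD [k Hk]. subst. rewrite Nat.div_mul by lia. lia.
Qed.

Lemma div_pos P D : (1 <= D)%nat -> (1 <= P)%nat -> Nat.divide D P -> (1 <= P / D)%nat.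
Proof.
  intros HD HP Hd. pose proof (div_exact_eq P D HD Hd). destruct (P / D)%nat; lia.
Qed.

Lemma delta_split s P D : (1 <= D)%nat -> (1 <= P)%nat -> Nat.divide D P ->
  delta s P = Cmult (delta s D) (delta s (P / D)%nat).
Proof.
  intros HD HP Hd. rewrite (div_exact_eq P D HD Hd) at 1.
  apply delta_mul; auto. apply div_pos; auto.
Qed.

Lemma delta_ratio s P D : (1 <= D)%nat -> (1 <= P)%nat -> Nat.divide D P ->
  Cmult (delta (Copp s) P) (delta s (P / D)%nat) = delta (Copp s) D.
Proof.
  intros HD HP Hd. rewrite (delta_split (Copp s) P D) by auto.
  rewrite <- Cmult_assoc. unfold delta at 2 3. rewrite cpow_opp. ring.
Qed.



Lemma base_ii s Z g gs2 fs2 post (f : arith) G prev :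
  is_series (fun k => delta (Copp s) (S k)) Z ->
  (1 <= g)%nat -> (forall x, In x gs2 -> (1 <= x)%nat) ->
  (1 <= G)%nat -> Nat.divide prev G ->
  is_series (fun k => Cmult (Saux (g :: gs2) (f :: fs2) (S k :: post) G prev) (delta (Copp s) (S k)))
   (Cmult Z (Cmult (delta (Copp s) prev)
      (star g (fun x => Saux gs2 fs2 post x x) (fun y => Cmult (delta s y) (f y)) prev))).
Proof.
  intros HZ Hg Hgs HG Hp.
  assert (Hprev : (1 <= prev)%nat).
  { destruct prev; [|lia]. destruct Hp as [k Hk]. lia. }
  set (Gj := fun x => Saux gs2 fs2 post x x).
  set (Pp := fun d => dvdb (Nat.pow d g) prev).
  set (Af := fun d => Cmult (Cmult (f (prev / Nat.pow d g)%nat) (Gj (Nat.pow d g)))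
                             (delta (Copp s) (Nat.pow d g))).
  assert (Hs := series_sum_sparse g prev Pp Af (delta (Copp s)) Z Hg HZ).
  replace (Cmult Z _) with (sum_dvd prev Pp (fun d => Cmult (Af d) Z)).
  - eapply is_series_ext; [| exact Hs]. intros k. simpl.
    cbn [Saux]. rewrite sum_dvd_mult_r. apply sum_dvd_eq.
    + intros d Hd. unfold Pp. destruct (dvdb (Nat.pow d g) prev) eqn:Ep.
      * assert (Ep' := Ep). apply dvdb_spec in Ep'.
        rewrite dvdb_gcd by (eapply Nat.divide_trans; eauto).
        destruct (dvdb (Nat.pow d g) (S k)) eqn:Ek.
        -- apply dvdb_spec in Ek. unfold at_ratio. rewrite Ep.
           rewrite (Saux_gcd gs2 Hgs fs2 post (Nat.gcd G (S k)) (Nat.pow d g) (Nat.pow d g)).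
           ++ rewrite (delta_split (Copp s) (S k) (Nat.pow d g)) by (auto using npow_pos; lia).
              unfold Af, Gj. ring.
           ++ apply gcd_pos; auto.
           ++ apply npow_pos; lia.
           ++ apply Nat.gcd_greatest; [eapply Nat.divide_trans; [exact Ep'|exact Hp] | exact Ek].
           ++ apply Nat.divide_refl.
        -- unfold Af. ring.
      * rewrite at_ratio_nd by auto. destruct (dvdb _ (Nat.gcd G (S k))); [|reflexivity]. ring.
    + intros d Hd. unfold Pp in Hd. apply dvdb_spec in Hd. destruct d; [lia|].
      apply (dvd_bound (S d) g prev); auto; lia.
    + intros d Hd. apply dvdb_spec in Hd. destruct d; [lia|].
      apply (dvd_bound (S d) g (Nat.gcd G (S k))); auto; try lia. apply gcd_pos; auto.
  - unfold star. rewrite sum_dvd_mult_l, sum_dvd_mult_l. apply sum_dvd_eq.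
    + intros d Hd. unfold Pp. destruct (dvdb (Nat.pow d g) prev) eqn:Ep; [|reflexivity].
      unfold at_ratio. rewrite Ep. apply dvdb_spec in Ep.
      unfold Af, Gj. rewrite <- (delta_ratio s prev (Nat.pow d g)) by (auto using npow_pos; lia).
      ring.
    + intros d Hd. unfold Pp in Hd. apply dvdb_spec in Hd. destruct d; [lia|].
      apply (dvd_bound (S d) g prev); auto; lia.
    + intros d Hd. apply dvdb_spec in Hd. destruct d; [lia|].
      apply (dvd_bound (S d) g prev); auto; lia.
Qed.



Lemma main_ii s Z g gs2 fs2 post (f : arith) :
  is_series (fun k => delta (Copp s) (S k)) Z ->
  (1 <= g)%nat -> (forall x, In x gs2 -> (1 <= x)%nat) ->
  forall pre gs1 fs1, length gs1 = length pre -> length fs1 = length pre ->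
  (forall x, In x gs1 -> (1 <= x)%nat) ->
  forall G prev, (1 <= G)%nat -> Nat.divide prev G ->
  is_series (fun k => Cmult (Saux (gs1 ++ g :: gs2) (fs1 ++ f :: fs2) (pre ++ S k :: post) G prev)
                            (delta (Copp s) (S k)))
    (Cmult Z (Saux gs1 (fs1 ++ [fun n => Cmult (delta (Copp s) n)
        (star g (fun x => Saux gs2 fs2 post x x) (fun y => Cmult (delta s y) (f y)) n)]) pre G prev)).
Proof.
  intros HZ Hg Hgs2 pre. induction pre as [|n pre IH]; intros gs1 fs1 L1 L2 Hgs1 G prev HG Hp.
  - destruct gs1; [|simpl in L1; lia]. destruct fs1; [|simpl in L2; lia].
    exact (base_ii s Z g gs2 fs2 post f G prev HZ Hg Hgs2 HG Hp).
  - destruct gs1 as [|g1 gs1]; [simpl in L1; lia|]. destruct fs1 as [|f1 fs1]; [simpl in L2; lia|].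
    simpl in L1, L2.
    cbn [app Saux]. rewrite sum_dvd_mult_l.
    eapply is_series_ext.
    { intros k. symmetry. apply sum_dvd_mult_r. }
    apply (is_series_sum_dvd _ _ (fun d k => Cmult (Cmult (at_ratio f1 prev (Nat.pow d g1))
       (Saux (gs1 ++ g :: gs2) (fs1 ++ f :: fs2) (pre ++ S k :: post) (Nat.gcd G n) (Nat.pow d g1)))
       (delta (Copp s) (S k)))).
    intros d Hd HP.
    eapply is_series_ext.
    { intros k. apply Cmult_assoc. }
    replace (Cmult Z _) with (Cmult (at_ratio f1 prev (Nat.pow d g1))
      (Cmult Z (Saux gs1 (fs1 ++ [fun n => Cmult (delta (Copp s) n)
        (star g (fun x => Saux gs2 fs2 post x x) (fun y => Cmult (delta s y) (f y)) n)]) pre (Nat.gcd G n) (Nat.pow d g1)))) by ring.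
    apply is_series_Cmult_l. apply IH; auto; try lia.
    + intros; apply Hgs1; right; auto.
    + apply dvdb_spec; auto.
Qed.



Lemma part_i s L g gs2 (f1 : arith) fs2 n2 post :
  is_series (fun k => Cmult (f1 (S k)) (delta (Copp s) (S k))) L ->
  (1 <= g)%nat -> (forall x, In x gs2 -> (1 <= x)%nat) -> (1 <= n2)%nat ->
  is_series (fun k => Cmult (Saux (g :: gs2) (f1 :: fs2) (n2 :: post) (S k) (S k)) (delta (Copp s) (S k)))
   (Cmult L (Cmult (delta (Copp s) n2)
      (star g (fun x => Saux gs2 fs2 post x x) (delta s) n2))).
Proof.
  intros HL Hg Hgs Hn2.
  set (Gj := fun x => Saux gs2 fs2 post x x).
  set (Pp := fun d => dvdb (Nat.pow d g) n2).
  set (Af := fun d => Cmult (Gj (Nat.pow d g)) (delta (Copp s) (Nat.pow d g))).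
  assert (Hs := series_sum_sparse g n2 Pp Af (fun n => Cmult (f1 n) (delta (Copp s) n)) L Hg HL).
  replace (Cmult L _) with (sum_dvd n2 Pp (fun d => Cmult (Af d) L)).
  - eapply is_series_ext; [| exact Hs]. intros k.
    cbn [Saux]. rewrite sum_dvd_mult_r. rewrite (Nat.gcd_comm (S k) n2). apply sum_dvd_eq.
    + intros d Hd. unfold Pp. destruct (dvdb (Nat.pow d g) n2) eqn:Ep.
      * assert (Ep' := Ep). apply dvdb_spec in Ep'.
        rewrite dvdb_gcd by auto.
        destruct (dvdb (Nat.pow d g) (S k)) eqn:Ek.
        -- assert (Ek' := Ek). apply dvdb_spec in Ek'. unfold at_ratio. rewrite Ek.
           rewrite (Saux_gcd gs2 Hgs fs2 post (Nat.gcd n2 (S k)) (Nat.pow d g) (Nat.pow d g)).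
           ++ rewrite (delta_split (Copp s) (S k) (Nat.pow d g)) by (auto using npow_pos; lia).
              unfold Af, Gj. ring.
           ++ apply gcd_pos; auto.
           ++ apply npow_pos; lia.
           ++ apply Nat.gcd_greatest; auto.
           ++ apply Nat.divide_refl.
        -- unfold Af. ring.
      * destruct (dvdb _ (Nat.gcd n2 (S k))) eqn:E2; [|reflexivity].
        apply dvdb_spec in E2. apply dvdb_false in Ep. exfalso. apply Ep.
        eapply Nat.divide_trans; [exact E2| apply Nat.gcd_divide_l].
    + intros d Hd. unfold Pp in Hd. apply dvdb_spec in Hd. destruct d; [lia|].
      apply (dvd_bound (S d) g n2); auto; lia.
    + intros d Hd. apply dvdb_spec in Hd. destruct d; [lia|].
      apply (dvd_bound (S d) g (Nat.gcd n2 (S k))); auto; try lia. apply gcd_pos; auto.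
  - unfold star. rewrite sum_dvd_mult_l, sum_dvd_mult_l. apply sum_dvd_eq.
    + intros d Hd. unfold Pp. destruct (dvdb (Nat.pow d g) n2) eqn:Ep; [|reflexivity].
      unfold at_ratio. rewrite Ep. apply dvdb_spec in Ep.
      unfold Af, Gj. rewrite <- (delta_ratio s n2 (Nat.pow d g)) by (auto using npow_pos; lia).
      ring.
    + intros d Hd. unfold Pp in Hd. apply dvdb_spec in Hd. destruct d; [lia|].
      apply (dvd_bound (S d) g n2); auto; lia.
    + intros d Hd. apply dvdb_spec in Hd. destruct d; [lia|].
      apply (dvd_bound (S d) g n2); auto; lia.
Qed.



Lemma exp_mono x y : x <= y -> exp x <= exp y.
Proof. intros [H|H]. left; apply exp_increasing; auto. subst; lra. Qed.

Lemma ln_le_sub1 y : 0 < y -> ln y <= y - 1.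
Proof. intros. pose proof (exp_ineq1_le (ln y)). rewrite exp_ln in H0 by auto. lra. Qed.

Lemma key_ineq t x : 0 < t -> 2 <= x ->
  t * exp (- (t + 1) * ln x) <= exp (- t * ln (x - 1)) - exp (- t * ln x).
Proof.
  intros Ht Hx.
  set (a := ln x - ln (x - 1)).
  assert (Ha : / x <= a).
  { unfold a. pose proof (ln_le_sub1 ((x - 1) / x) ltac:(apply Rdiv_lt_0_compat; lra)).
    rewrite ln_div in H by lra.
    assert ((x - 1) / x - 1 = - / x) by (field; lra). lra. }
  set (E := exp (- t * ln x)).
  assert (HE : 0 < E) by apply exp_pos.
  assert (H1 : exp (- (t + 1) * ln x) = E * / x).
  { unfold E. replace (- (t + 1) * ln x) with (- t * ln x + - ln x) by ring.
    rewrite exp_plus, exp_Ropp, exp_ln by lra. reflexivity. }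
  assert (H2 : exp (- t * ln (x - 1)) = E * exp (t * a)).
  { unfold E, a. rewrite <- exp_plus. f_equal. ring. }
  rewrite H1, H2.
  pose proof (exp_ineq1_le (t * a)).
  assert (t * / x <= t * a) by (apply Rmult_le_compat_l; lra).
  assert (E * (1 + t * / x) <= E * exp (t * a)) by (apply Rmult_le_compat_l; lra).
  assert (E * (1 + t * / x) = E + t * (E * / x)) by ring. lra.
Qed.

Lemma zeta_real_conv sg : 1 < sg ->
  ex_series (fun k => exp (- sg * ln (INR (S k)))).
Proof.
  intros Hs. set (t := sg - 1).
  assert (Ht : 0 < t) by (unfold t; lra).
  set (b := fun k => exp (- sg * ln (INR (S k)))).
  assert (Hb : forall N, sum_n b N <= 1 + (1 - exp (- t * ln (INR (S N)))) / t).
  { induction N.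
    - unfold sum_n. rewrite sum_n_n. unfold b. simpl. rewrite ln_1.
      rewrite !Rmult_0_r, exp_0. unfold Rdiv. lra.
    - rewrite sum_Sn. change (plus (sum_n b N) (b (S N))) with (sum_n b N + b (S N)).
      pose proof (key_ineq t (INR (S (S N))) Ht).
      assert (2 <= INR (S (S N))).
      { rewrite S_INR, S_INR. pose proof (pos_INR N). lra. }
      specialize (H H0).
      replace (INR (S (S N)) - 1) with (INR (S N)) in H by (rewrite (S_INR (S N)); ring).
      replace (- (t + 1)) with (- sg) in H by (unfold t; ring).
      unfold b at 2.
      assert (exp (- sg * ln (INR (S (S N)))) <= (exp (- t * ln (INR (S N))) - exp (- t * ln (INR (S (S N))))) / t).
      { apply Rmult_le_reg_l with t; auto. field_simplify; lra. }
      assert (forall u v, (1 - u) / t + (u - v) / t = (1 - v) / t) by (intros; field; lra).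
      specialize (H2 (exp (- t * ln (INR (S N)))) (exp (- t * ln (INR (S (S N)))))).
      lra. }
  assert (Hl : ex_finite_lim_seq (sum_n b)).
  { apply ex_finite_lim_seq_incr with (M := 1 + 1 / t).
    - intros n. rewrite sum_Sn. change (plus (sum_n b n) (b (S n))) with (sum_n b n + b (S n)). pose proof (exp_pos (- sg * ln (INR (S (S n))))). unfold b. lra.
    - intros n. eapply Rle_trans; [apply Hb|].
      pose proof (exp_pos (- t * ln (INR (S n)))).
      assert ((1 - exp (- t * ln (INR (S n)))) / t <= 1 / t).
      { unfold Rdiv. apply Rmult_le_compat_r. left; apply Rinv_0_lt_compat; auto. lra. }
      lra. }
  destruct Hl as [l Hl]. exists l. exact Hl.
Qed.

Lemma zeta_conv s : 1 < Re s -> exists Z, is_series (fun k => delta (Copp s) (S k)) Z.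
Proof.
  intros Hs. assert (H : ex_series (fun k => delta (Copp s) (S k))).
  { apply (ex_series_le (K := C_AbsRing) (V := C_CompleteNormedModule) _ (fun k => exp (- Re s * ln (INR (S k))))).
    - intros n. change (norm (delta (Copp s) (S n))) with (Cmod (cpow (INR (S n)) (Copp s))).
      rewrite Cmod_cpow. right. reflexivity.
    - apply zeta_real_conv; auto. }
  exact H.
Qed.

Lemma L_conv (f : arith) s : Rbar_lt (sigma_abs f) (Finite (Re s)) ->
  exists L, is_series (fun k => Cmult (f (S k)) (delta (Copp s) (S k))) L.
Proof.
  intros H. unfold sigma_abs in H.
  set (Es := fun x : R => ex_series (fun k => Cmod (f (S k)) * Rpower (INR (S k)) (- x))) in *.
  assert (Hx : exists x, Es x /\ x < Re s).
  { apply NNPP. intros Hn.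
    destruct (Glb_Rbar_correct Es) as [_ Hglb].
    assert (Hlb : is_lb_Rbar Es (Finite (Re s))).
    { intros x Ex. simpl. destruct (Rle_lt_dec (Re s) x); auto. exfalso; apply Hn; eauto. }
    apply Hglb in Hlb. eapply Rbar_lt_not_le; eauto. }
  destruct Hx as [x [Ex Hxs]].
  assert (Hc : ex_series (fun k => Cmult (f (S k)) (delta (Copp s) (S k)))).
  { apply (ex_series_le (K := C_AbsRing) (V := C_CompleteNormedModule) _ (fun k => Cmod (f (S k)) * Rpower (INR (S k)) (- x))); [| exact Ex].
    intros n. change (norm (Cmult (f (S n)) (delta (Copp s) (S n)))) with
      (Cmod (Cmult (f (S n)) (cpow (INR (S n)) (Copp s)))).
    rewrite Cmod_mult, Cmod_cpow. unfold Rpower.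
    apply Rmult_le_compat_l. apply Cmod_ge_0.
    apply exp_mono. change (Re (Copp s)) with (- Re s).
    assert (0 <= ln (INR (S n))).
    { rewrite <- ln_1. apply ln_le; [lra|]. rewrite S_INR; pose proof (pos_INR n); lra. }
    nra. }
  exact Hc.
Qed.

Lemma list_split {A} (l : list A) n d : (n < length l)%nat ->
  l = firstn n l ++ nth n l d :: skipn (S n) l.
Proof.
  revert n. induction l as [|x l IH]; intros n Hn; simpl in Hn; [lia|].
  destruct n; simpl; [reflexivity|]. f_equal. apply IH. lia.
Qed.

Theorem proposition3p1 (m : nat) (gam : list nat) (fs : list arith) :
  (1 <= m)%nat -> length gam = m -> (forall g, In g gam -> (1 <= g)%nat) ->
  length fs = (m + 1)%nat ->
  (* (i) *)
  (forall (post : list nat) (s : C),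
     length post = m -> (forall n, In n post -> (1 <= n)%nat) ->
     Rbar_lt (sigma_abs (nth 0 fs (fun _ => RtoC 0))) (Finite (Re s)) ->
     let f1 := nth 0 fs (fun _ => RtoC 0) in
     let G2 : arith := fun x => Sfun (skipn 1 gam) (skipn 1 fs) (x :: skipn 1 post) in
     let F1 : arith := fun n =>
       Cmult (delta (Copp s) n) (star (nth 0 gam 0%nat) G2 (delta s) n) in
     exists L : C,
       is_series (fun k => Cmult (f1 (S k)) (delta (Copp s) (S k))) L /\
       is_series (fun k => Cmult (Sfun gam fs (S k :: post))
                                 (delta (Copp s) (S k)))
                 (Cmult L (F1 (nth 0 post 0%nat)))) /\
  (* (ii) *)
  (forall (j : nat) (pre post : list nat) (s : C),
     (2 <= j <= m + 1)%nat ->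
     length pre = (j - 1)%nat -> length post = (m + 1 - j)%nat ->
     (forall n, In n pre -> (1 <= n)%nat) -> (forall n, In n post -> (1 <= n)%nat) ->
     1 < Re s ->
     let Gj : arith := fun x => Sfun (skipn (j - 1) gam) (skipn (j - 1) fs) (x :: post) in
     let fj1 := nth (j - 2) fs (fun _ => RtoC 0) in
     let Fj : arith := fun n =>
       Cmult (delta (Copp s) n)
             (star (nth (j - 2) gam 0%nat) Gj (fun y => Cmult (delta s y) (fj1 y)) n) in
     exists Z : C,
       is_series (fun k => delta (Copp s) (S k)) Z /\
       is_series (fun k => Cmult (Sfun gam fs (pre ++ S k :: post))
                                 (delta (Copp s) (S k)))
                 (Cmult Z (Sfun (firstn (j - 2) gam) (firstn (j - 2) fs ++ [Fj]) pre))).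
Proof.
  intros Hm Hlg Hg1 Hlf. split.
  - intros post s Hlp Hp1 Hsig f1 G2 F1.
    destruct (L_conv (nth 0 fs (fun _ => RtoC 0)) s Hsig) as [L HL].
    exists L. split; [exact HL|].
    destruct gam as [|g gs2]; [simpl in Hlg; lia|].
    destruct fs as [|f1' [|f2 fs2]]; [simpl in Hlf; lia|simpl in Hlf; lia|].
    destruct post as [|n2 post']; [simpl in Hlp; lia|].
    exact (part_i s L g gs2 f1' (f2 :: fs2) n2 post' HL
             (Hg1 g (or_introl eq_refl))
             (fun x Hx => Hg1 x (or_intror Hx))
             (Hp1 n2 (or_introl eq_refl))).
  - intros j pre post s Hj Hlpre Hlpost Hpre1 Hpost1 Hs Gj fj1 Fj.
    destruct (zeta_conv s Hs) as [Z HZ].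
    exists Z. split; [exact HZ|].
    destruct j as [|[|p]]; [lia|lia|].
    destruct pre as [|n1 pre']; [simpl in Hlpre; lia|].
    assert (Hg : gam = firstn p gam ++ nth p gam 0%nat :: skipn (S p) gam) by (apply list_split; lia).
    assert (Hf : fs = firstn p fs ++ nth p fs (fun _ => RtoC 0) :: skipn (S p) fs) by (apply list_split; lia).
    assert (Hin : forall x, In x (firstn p gam) \/ x = nth p gam 0%nat \/ In x (skipn (S p) gam) -> (1 <= x)%nat).
    { intros x Hx. apply Hg1. rewrite Hg. apply in_or_app.
      destruct Hx as [H|[H|H]]; [left; exact H | right; left; symmetry; exact H | right; right; exact H]. }
    assert (L1 : length (firstn p gam) = length pre').
    { rewrite length_firstn. simpl in Hlpre. lia. }
    assert (L2 : length (firstn p fs) = length pre').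
    { rewrite length_firstn. simpl in Hlpre. lia. }
    pose proof (main_ii s Z (nth p gam 0%nat) (skipn (S p) gam) (skipn (S p) fs) post
                  (nth p fs (fun _ => RtoC 0)) HZ
                  (Hin _ (or_intror (or_introl eq_refl)))
                  (fun x Hx => Hin x (or_intror (or_intror Hx)))
                  pre' (firstn p gam) (firstn p fs) L1 L2
                  (fun x Hx => Hin x (or_introl Hx))
                  n1 n1 (Hpre1 n1 (or_introl eq_refl)) (Nat.divide_refl n1)) as M.
    rewrite <- Hg, <- Hf in M.
    subst Gj fj1 Fj.
    replace (S (S p) - 2)%nat with p by lia.
    replace (S (S p) - 1)%nat with (S p) by lia.
    exact M.
Qed.
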